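(* Let $y,z$ be nonzero complex numbers and let $u_n=u_n(y,z)$, $v_n=v_n(y,z)$ be the Lucas sequences of the first and second kind. Let $x,r\in\mathbb{C}$ and let $c,n$ be integers with $n\ge c$; if $c<0$ assume moreover $r\neq 0$. Then \[ \sum_{k=c}^n(-1)^k x^{n-k}r^k\big(r v_{k+1}(y,z)+(xy+2rz)u_k(y,z)\big)=(-1)^n y\,r^{n+1}u_{n+1}(y,z)+(-1)^c r^c y\,x^{n-c+1}u_c(y,z) \] and \[ \sum_{k=c}^n(-1)^k x^{n-k}r^k\big((y^2-4z)r\,u_{k+1}(y,z)+(xy+2rz)v_k(y,z)\big)=(-1)^n y\,r^{n+1}v_{n+1}(y,z)+(-1)^c r^c y\,x^{n-c+1}v_c(y,z). \]
   Context: For nonzero complex numbers $y,z$, the Lucas sequences $u_n(y,z)$ and $v_n(y,z)$ are defined by $u_0=0$, $u_1=1$, $v_0=2$, $v_1=y$ and $w_n=y\,w_{n-1}-z\,w_{n-2}$ for $n\ge 2$ (for $w=u$ and $w=v$), and extended to negative indices by $u_{-n}(y,z)=-u_n(y,z)/z^n$ and $v_{-n}(y,z)=v_n(y,z)/z^n$. *)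

(* Defs.v *)
From HB Require Import structures.
From mathcomp Require Import all_boot all_order all_algebra.
From mathcomp Require Import complex.
From mathcomp Require Import Rstruct.
Set Implicit Arguments. Unset Strict Implicit. Unset Printing Implicit Defensive.
Import Order.TTheory GRing.Theory Num.Theory.
Local Open Scope ring_scope.

Notation C := (complex Rdefinitions.R).

Fixpoint lucas_pair (y z w0 w1 : C) (n : nat) : C * C :=
  match n with
  | 0%N => (w0, w1)
  | m.+1 => let p := lucas_pair y z w0 w1 m in (p.2, y * p.2 - z * p.1)
  end.

Definition u_nat (y z : C) (n : nat) : C := (lucas_pair y z 0 1 n).1.
Definition v_nat (y z : C) (n : nat) : C := (lucas_pair y z 2 y n).1.

Definition lucas_u (y z : C) (n : int) : C :=
  match n with
  | Posz m => u_nat y z m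
  | Negz m => - u_nat y z m.+1 / z ^+ m.+1
  end.

Definition lucas_v (y z : C) (n : int) : C :=
  match n with
  | Posz m => v_nat y z m
  | Negz m => v_nat y z m.+1 / z ^+ m.+1
  end.

(* Sum over integers k with c <= k <= n (assuming c <= n). *)
Definition isum (c n : int) (F : int -> C) : C :=
  \sum_(0 <= i < (absz (n - c)).+1) F (c + i%:Z).

(* Main.v *)
Require Import Defs.
From HB Require Import structures.
From mathcomp Require Import all_boot all_order all_algebra.
From mathcomp Require Import complex Rstruct.
From mathcomp Require Import ring lra zify.
Import Order.TTheory GRing.Theory Num.Theory.
Local Open Scope ring_scope.

Section G.
Variables (F : fieldType) (y z : F).
Hypothesis z0 : z != 0.
Lemma A1u : 1 = y * 0 - z * (-1 / z). Proof. by field. Qed.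
Lemma A2u : 0 = y * (-1 / (z * 1)) - z * (- (y * 1 - z * 0) / (z * (z * 1))).
Proof. by field. Qed.
Lemma A3u a b m : - a / (z * z ^+ m) = y * (- b / (z * (z * z ^+ m))) - z * (- (y * b - z * a) / (z * (z * (z * z ^+ m)))).
Proof. have zm : z ^+ m != 0 by rewrite expf_eq0 negb_and z0 orbT. by field; rewrite z0 zm. Qed.
Lemma A1v : y = y * 2 - z * (y / z). Proof. by field. Qed.
Lemma A2v : 2 = y * (y / (z * 1)) - z * ((y * y - z * 2) / (z * (z * 1))).
Proof. by field. Qed.
Lemma A3v a b m : a / (z * z ^+ m) = y * (b / (z * (z * z ^+ m))) - z * ((y * b - z * a) / (z * (z * (z * z ^+ m)))).
Proof. have zm : z ^+ m != 0 by rewrite expf_eq0 negb_and z0 orbT. by field; rewrite z0 zm. Qed.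
Lemma R1 a0 a1 a2 a3 b1 b2 b3 :
  a2 = y * a1 - z * a0 -> a3 = y * a2 - z * a1 -> b3 = y * b2 - z * b1 ->
  b3 - y * a3 + 2 * z * a2 = y * (b2 - y * a2 + 2 * z * a1) - z * (b1 - y * a1 + 2 * z * a0).
Proof. move=> h2 h3 h4; rewrite h4 h3 h2; ring. Qed.
Lemma R2 a0 a1 a2 a3 b1 b2 b3 b0 :
  a2 = y * a1 - z * a0 -> a3 = y * a2 - z * a1 -> b3 = y * b2 - z * b1 -> b2 = y * b1 - z * b0 ->
  y * b3 - (y ^+ 2 - 4 * z) * a3 - 2 * z * b2 =
  y * (y * b2 - (y ^+ 2 - 4 * z) * a2 - 2 * z * b1) - z * (y * b1 - (y ^+ 2 - 4 * z) * a1 - 2 * z * b0).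
Proof. move=> h2 h3 h4 h5; rewrite h4 h3 h5 h2; ring. Qed.
Lemma E1 (a b c : F) : a - b + c = 0 -> a = b - c.
Proof. by move=> h; rewrite -{1}(subr0 a) -h; ring. Qed.
Lemma Z1 : y - y * 1 + 2 * z * 0 = 0. Proof. ring. Qed.
Lemma Z2 : y * y - z * 2 - y * (y * 1 - z * 0) + 2 * z * 1 = 0. Proof. ring. Qed.
Lemma E2 (a b c : F) : a - b - c = 0 -> a = b + c.
Proof. by move=> h; rewrite -{1}(subr0 a) -h; ring. Qed.
Lemma Z3 : y * y - (y ^+ 2 - 4 * z) * 1 - 2 * z * 2 = 0. Proof. ring. Qed.
Lemma Z4 : y * (y * y - z * 2) - (y ^+ 2 - 4 * z) * (y * 1 - z * 0) - 2 * z * y = 0. Proof. ring. Qed.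
End G.
Section G2.
Variables (F : comRingType).
Lemma T1 (e X R x y z r U0 U1 V1 : F) : V1 = y * U1 - 2 * z * U0 ->
  e * X * R * (r * V1 + (x * y + 2 * r * z) * U0) =
  - (e * (-1) * y * (R * r) * X * U1) - - (e * y * R * (X * x) * U0).
Proof. move=> ->; ring. Qed.
Lemma T3 (e X R x y z r V0 U1 V1 : F) : y * V1 = (y ^+ 2 - 4 * z) * U1 + 2 * z * V0 ->
  e * X * R * ((y ^+ 2 - 4 * z) * r * U1 + (x * y + 2 * r * z) * V0) =
  - (e * (-1) * y * (R * r) * X * V1) - - (e * y * R * (X * x) * V0).
Proof.
move=> h; have -> : (y ^+ 2 - 4 * z) * r * U1 = r * (y * V1 - 2 * z * V0) by rewrite h; ring.
ring.
Qed.
Lemma T2 (e y Rn Un ec Rc Xc Uc : F) :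
  - (e * (-1) * y * Rn * 1 * Un) - - (ec * y * Rc * Xc * Uc) = e * y * Rn * Un + ec * Rc * y * Xc * Uc.
Proof. ring. Qed.
End G2.

Section L.
Variables (y z : C).
Hypothesis z0 : z != 0.

Lemma lp_rec w0 w1 m : (lucas_pair y z w0 w1 m.+2).1 =
  y * (lucas_pair y z w0 w1 m.+1).1 - z * (lucas_pair y z w0 w1 m).1.
Proof. by []. Qed.

Lemma zero_seq (f : int -> C) :
  (forall k, f (k + 2) = y * f (k + 1) - z * f k) -> f 0 = 0 -> f 1 = 0 ->
  forall k, f k = 0.
Proof.
move=> H f0 f1.
have Hp : forall m : nat, f m = 0 /\ f m.+1 = 0.
  elim=> [|m [IH1 IH2]]; first by [].
  split=> //; have := H m; rewrite (_ : m%:Z + 2 = m.+2%:Z); last by lia.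
  rewrite (_ : m%:Z + 1 = m.+1%:Z); last by lia.
  by move=> ->; rewrite IH1 IH2 !mulr0 subr0.
have Hn : forall m : nat, f (- m%:Z) = 0 /\ f (- m%:Z + 1) = 0.
  elim=> [|m [IH1 IH2]]; first by rewrite oppr0 add0r.
  split; last by rewrite (_ : - m.+1%:Z + 1 = - m%:Z); [|lia].
  have := H (- m.+1%:Z).
  rewrite (_ : - m.+1%:Z + 1 = - m%:Z); last by lia.
  rewrite (_ : - m.+1%:Z + 2 = - m%:Z + 1); last by lia.
  rewrite IH1 IH2 mulr0 sub0r => /eqP; rewrite eq_sym oppr_eq0 mulf_eq0 (negbTE z0) /=.
  by move/eqP.
by case=> m; [case: (Hp m) | rewrite NegzE; case: (Hn m.+1)].
Qed.
Lemma u_rec k : lucas_u y z (k + 2) = y * lucas_u y z (k + 1) - z * lucas_u y z k.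
Proof.
case: k => m.
  rewrite (_ : m%:Z + 2 = m.+2%:Z); last by lia.
  rewrite (_ : m%:Z + 1 = m.+1%:Z); last by lia.
  exact: lp_rec.
case: m => [|[|m]].
- rewrite (_ : Negz 0 + 2 = 1%:Z) // (_ : Negz 0 + 1 = 0%:Z) //.
  rewrite /lucas_u /u_nat /= expr1. exact: A1u.
- rewrite (_ : Negz 1 + 2 = 0%:Z) // (_ : Negz 1 + 1 = Negz 0) //.
  rewrite /lucas_u /u_nat /= !exprS expr0. exact: A2u.
- rewrite (_ : Negz m.+2 + 2 = Negz m); last by rewrite !NegzE; lia.
  rewrite (_ : Negz m.+2 + 1 = Negz m.+1); last by rewrite !NegzE; lia.
  rewrite /lucas_u /u_nat (lp_rec _ _ m.+1) !exprS. exact: A3u.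
Qed.
Lemma v_rec k : lucas_v y z (k + 2) = y * lucas_v y z (k + 1) - z * lucas_v y z k.
Proof.
case: k => m.
  rewrite (_ : m%:Z + 2 = m.+2%:Z); last by lia.
  rewrite (_ : m%:Z + 1 = m.+1%:Z); last by lia.
  exact: lp_rec.
case: m => [|[|m]].
- rewrite (_ : Negz 0 + 2 = 1%:Z) // (_ : Negz 0 + 1 = 0%:Z) //.
  rewrite /lucas_v /v_nat /= expr1. exact: A1v.
- rewrite (_ : Negz 1 + 2 = 0%:Z) // (_ : Negz 1 + 1 = Negz 0) //.
  rewrite /lucas_v /v_nat /= !exprS expr0. exact: A2v.
- rewrite (_ : Negz m.+2 + 2 = Negz m); last by rewrite !NegzE; lia.
  rewrite (_ : Negz m.+2 + 1 = Negz m.+1); last by rewrite !NegzE; lia.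
  rewrite /lucas_v /v_nat (lp_rec _ _ m.+1) !exprS. exact: A3v.
Qed.

Lemma D1 k : lucas_v y z (k + 1) = y * lucas_u y z (k + 1) - 2 * z * lucas_u y z k.
Proof.
pose f k := lucas_v y z (k + 1) - y * lucas_u y z (k + 1) + 2 * z * lucas_u y z k.
suff : f k = 0 by rewrite /f => /E1.
apply: (@zero_seq f) => [j||]; rewrite /f.
- rewrite (_ : j + 2 + 1 = (j + 1) + 2); last by lia.
  have e : j + 1 + 1 = j + 2 by lia.
  rewrite e; apply: R1.
  + exact: u_rec.
  + by rewrite u_rec e.
  + by rewrite v_rec e.
- rewrite /lucas_v /lucas_u /v_nat /u_nat /=. exact: Z1.
- rewrite /lucas_v /lucas_u /v_nat /u_nat /=. exact: Z2.
Qed.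

Lemma D2 k : y * lucas_v y z (k + 1) = (y ^+ 2 - 4 * z) * lucas_u y z (k + 1) + 2 * z * lucas_v y z k.
Proof.
pose f k := y * lucas_v y z (k + 1) - (y ^+ 2 - 4 * z) * lucas_u y z (k + 1) - 2 * z * lucas_v y z k.
suff : f k = 0 by rewrite /f => /E2.
apply: (@zero_seq f) => [j||]; rewrite /f.
- rewrite (_ : j + 2 + 1 = (j + 1) + 2); last by lia.
  have e : j + 1 + 1 = j + 2 by lia.
  rewrite e; apply: R2.
  + exact: u_rec.
  + by rewrite u_rec e.
  + by rewrite v_rec e.
  + exact: v_rec.
- rewrite /lucas_v /lucas_u /v_nat /u_nat /=. exact: Z3.
- rewrite /lucas_v /lucas_u /v_nat /u_nat /=. exact: Z4.
Qed.
End L.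

Lemma tele (c n : int) (B F : int -> C) : c <= n ->
  (forall k, c <= k <= n -> F k = B (k + 1) - B k) -> isum c n F = B (n + 1) - B c.
Proof.
move=> cn H; rewrite /isum.
rewrite (eq_big_nat _ _ (F2 := fun i => B (c + i.+1%:Z) - B (c + i%:Z))); last first.
  move=> i /andP[_ hi]; rewrite H; last by apply/andP; split; lia.
  by rewrite (_ : c + i%:Z + 1 = c + i.+1%:Z) //; lia.
rewrite (telescope_sumr (fun i => B (c + i%:Z))) // addr0.
by rewrite (_ : c + _ = n + 1) //; lia.
Qed.

Theorem theorem2 (y z x r : C) (c n : int) :
  y != 0 -> z != 0 -> c <= n -> (c < 0 -> r != 0) ->
  isum c n (fun k => (-1) ^ k * x ^ (n - k) * r ^ k *
      (r * lucas_v y z (k + 1) + (x * y + 2 * r * z) * lucas_u y z k))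
    = (-1) ^ n * y * r ^ (n + 1) * lucas_u y z (n + 1)
      + (-1) ^ c * r ^ c * y * x ^ (n - c + 1) * lucas_u y z c
  /\
  isum c n (fun k => (-1) ^ k * x ^ (n - k) * r ^ k *
      ((y ^+ 2 - 4 * z) * r * lucas_u y z (k + 1) + (x * y + 2 * r * z) * lucas_v y z k))
    = (-1) ^ n * y * r ^ (n + 1) * lucas_v y z (n + 1)
      + (-1) ^ c * r ^ c * y * x ^ (n - c + 1) * lucas_v y z c.
Proof.
move=> y0 z0 cn hr.
have hm : forall k : int, (-1 : C) ^ (k + 1) = (-1) ^ k * (-1).
  by move=> k; rewrite exprzDr ?unitrN1 // expr1z.
have hrk : forall k : int, c <= k -> r ^ (k + 1) = r ^ k * r.
  move=> k ck; case: (leP 0 k) => k0.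
    by rewrite exprzD_ss ?expr1z //; apply/orP; left; apply/andP; split; lia.
  by rewrite exprzDr ?expr1z // unitfE hr //; lia.
have hx1 : forall k : int, n - (k + 1) + 1 = n - k by move=> k; lia.
have hx2 : forall k : int, k <= n -> x ^ (n - k + 1) = x ^ (n - k) * x.
  move=> k kn; rewrite exprzD_ss ?expr1z //; apply/orP; left; apply/andP; split; lia.
have hn : n - (n + 1) + 1 = 0 by lia.
split.
- rewrite (@tele c n (fun k => - ((-1) ^ k * y * r ^ k * x ^ (n - k + 1) * lucas_u y z k))) //.
    rewrite hn expr0z hm. exact: T2.
  move=> k /andP[ck kn]; rewrite hm hrk // hx1 hx2 //.
  apply: T1; exact: D1.
- rewrite (@tele c n (fun k => - ((-1) ^ k * y * r ^ k * x ^ (n - k + 1) * lucas_v y z k))) //.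
    rewrite hn expr0z hm. exact: T2.
  move=> k /andP[ck kn]; rewrite hm hrk // hx1 hx2 //.
  apply: T3; exact: D2.
Qed.
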